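(* Let $\frac23\le M<\frac34$. Algorithm D (defined in the context) has migration factor at most $M$, and on every input whose optimal offline makespan is $1$ it produces a schedule of makespan at most $2-M$. Hence its competitive ratio is at most $2-M$.
   Context: Model (two hierarchical machines with migration, bin stretching). Jobs $1,2,\dots,n$ arrive one by one ($n$ unknown in advance). Job $j$ has a size $p_j>0$ and a grade of service (GoS) $g_j\in\{1,2\}$; a job of GoS $1$ may only be processed on machine $m_1$, a job of GoS $2$ may be processed on $m_1$ or on $m_2$. The load of a machine is the total size of its jobs, the makespan is the maximum load. When job $j$ arrives, the algorithm must assign it, and may migrate previously arrived jobs (respecting GoS) of total size at most $M\cdot p_j$ (migration factor $M$). Bin stretching: the optimal offline makespan of the complete input is known in advance and scaled to $1$. The competitive ratio is the supremum over inputs of (algorithm's makespan)/(optimal makespan). Notation: $Y_{j}$ is the set of jobs on $m_2$ just after job $j$ has been handled, $y_j$ its total size, $y_0=0$; ''sorted $Y_{j-1}$'' lists $Y_{j-1}$ in non-increasing order of size; $w_j$ is the total size of the (current) set $W$. Algorithm D (parameter $M$). On arrival of job $j$: Step 2: if $g_j=1$ or $y_{j-1}\ge M$, assign $j$ to $m_1$. Step 3: else if $y_{j-1}+p_j\le 2-M$, assign $j$ to $m_2$. Step 4: else if $p_j\ge M$: let $W$ be the longest prefix of sorted $Y_{j-1}$ with total size at most $M\cdot p_j$ (possibly empty). If $y_{j-1}-w_j+p_j>2-M$, assign $j$ to $m_1$; otherwise migrate the jobs of $W$ to $m_1$ and assign $j$ to $m_2$. Step 5: else (so $p_j<M$): let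 $W$ be the shortest prefix of sorted $Y_{j-1}$ with total size at least $M/3$ (or $Y_{j-1}$ if none exists). If $w_j>\min\{2M/3,\,M\cdot p_j\}$, replace $W$ by $Y_{j-1}\setminus W$. Then, if $y_{j-1}-w_j+p_j>2-M$, assign $j$ to $m_1$; otherwise migrate the jobs of $W$ to $m_1$ and assign $j$ to $m_2$. *)

(* Defs.v *)
(* Two hierarchical machines with migration, bin stretching,
   Algorithm D. Jobs are indexed 0 .. n-1 (job j of the paper is index j-1). *)
From mathcomp Require Import all_boot all_order all_algebra.
Set Implicit Arguments. Unset Strict Implicit. Unset Printing Implicit Defensive.
Import Order.TTheory GRing.Theory Num.Theory.
Local Open Scope ring_scope.

(* Grade of service: G1 = GoS 1 (only m1), G2 = GoS 2 (m1 or m2). *)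
Inductive gos := G1 | G2.
Definition gos_eqb (a b : gos) : bool :=
  match a, b with G1, G1 | G2, G2 => true | _, _ => false end.

Section AlgD.
Variable R : realFieldType.

Definition jload (p : nat -> R) (s : seq nat) : R := \sum_(i <- s) p i.

Definition sortY (p : nat -> R) (Y : seq nat) : seq nat :=
  sort (fun a b => p b <= p a) Y.

(* length of the longest prefix of s with total size at most b
   (0, i.e. the empty prefix, if there is none) *)
Definition longest_le (p : nat -> R) (b : R) (s : seq nat) : nat :=
  last 0%N [seq k <- iota 0 (size s).+1 | jload p (take k s) <= b].

(* length of the shortest prefix of s with total size at least b
   (size s, i.e. all of s, if there is none) *)
Definition shortest_ge (p : nat -> R) (b : R) (s : seq nat) : nat :=
  head (size s) [seq k <- iota 0 (size s).+1 | b <= jload p (take k s)].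

(* state: (jobs on m1, jobs on m2) *)
Definition state := (seq nat * seq nat)%type.

(* Handling of job j by Algorithm D with parameter M, from state (X, Y).
   Returns the new state and the list of migrated jobs. *)
Definition stepD (M : R) (p : nat -> R) (g : nat -> gos) (j : nat)
    (st : state) : state * seq nat :=
  let: (X, Y) := st in
  let y := jload p Y in
  if gos_eqb (g j) G1 || (M <= y) then ((j :: X, Y), [::])            (* Step 2 *)
  else if y + p j <= 2 - M then ((X, j :: Y), [::])                    (* Step 3 *)
  else
    let sY := sortY p Y in
    (* (W, Y \ W) *)
    let WR :=
      if M <= p j then                                                   (* Step 4 *)
        let k := longest_le p (M * p j) sY in (take k sY, drop k sY)
      else                                                               (* Step 5 *)
        let k := shortest_ge p (M / 3) sY in
        if Num.min (2 * M / 3) (M * p j) < jload p (take k sY)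
        then (drop k sY, take k sY) else (take k sY, drop k sY) in
    let W := WR.1 in
    if 2 - M < y - jload p W + p j then ((j :: X, Y), [::])
    else ((W ++ X, j :: WR.2), W).

(* state just after job j-1 has been handled (i.e. after the first j jobs) *)
Fixpoint runD (M : R) (p : nat -> R) (g : nat -> gos) (j : nat) : state :=
  match j with
  | 0 => ([::], [::])
  | j'.+1 => (stepD M p g j' (runD M p g j')).1
  end.

Definition migratedD (M : R) (p : nat -> R) (g : nat -> gos) (j : nat) : seq nat :=
  (stepD M p g j (runD M p g j)).2.

Definition makespanD (M : R) (p : nat -> R) (g : nat -> gos) (n : nat) : R :=
  let: (X, Y) := runD M p g n in Num.max (jload p X) (jload p Y).

(* Offline schedules: a j = true means job j is on m2. *)
Definition feasible (n : nat) (g : nat -> gos) (a : nat -> bool) : Prop :=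
  forall j, (j < n)%N -> a j -> g j = G2.

Definition makespan (n : nat) (p : nat -> R) (a : nat -> bool) : R :=
  Num.max (\sum_(j < n | ~~ a j) p j) (\sum_(j < n | a j) p j).

Definition opt_is_one (n : nat) (p : nat -> R) (g : nat -> gos) : Prop :=
  (exists a, feasible n g a /\ makespan n p a <= 1) /\
  (forall a, feasible n g a -> 1 <= makespan n p a).

End AlgD.

(* Main.v *)
Require Import Defs.
From mathcomp Require Import all_boot all_order all_algebra ring lra.
Import Order.TTheory GRing.Theory Num.Theory.
Set Implicit Arguments. Unset Strict Implicit.
Local Open Scope ring_scope.

Lemma last_filterP (P : pred nat) x0 s : P x0 -> P (last x0 (filter P s)).
Proof.
elim: s x0 => [|x s IH] x0 //= Hx0.
case: ifP => [Px|_] /=; [exact: IH | exact: IH].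
Qed.

Lemma last_filter_ge (P : pred nat) d a N :
  (forall k, k \in filter P (iota a N) -> k <= last d (filter P (iota a N)))%N.
Proof.
elim: N a d => [|N IH] a d k //=.
case: ifP => [Pa|Pa] /=.
  rewrite inE => /orP [/eqP ->|Hk].
  - have := mem_last a (filter P (iota a.+1 N)).
    rewrite inE => /orP [/eqP ->//|].
    rewrite mem_filter mem_iota => /andP [_ /andP [H _]].
    by apply: ltnW.
  - exact: IH.
move=> Hk; exact: IH.
Qed.

Lemma head_filter_le (P : pred nat) d a N :
  (forall k, k \in filter P (iota a N) -> head d (filter P (iota a N)) <= k)%N.
Proof.
elim: N a d => [|N IH] a d k //=.
case: ifP => [Pa|Pa] /=.
  rewrite inE => /orP [/eqP ->//|].
  rewrite mem_filter mem_iota => /andP [_ /andP [H _]].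
  by apply: ltnW.
move=> Hk; exact: IH.
Qed.

Section Gen.
Variable R : realFieldType.
Variable p : nat -> R.

Lemma jload_cons x s : jload p (x :: s) = p x + jload p s.
Proof. by rewrite /jload big_cons. Qed.

Lemma jload_nil : jload p [::] = 0.
Proof. by rewrite /jload big_nil. Qed.

Lemma jload_cat s1 s2 : jload p (s1 ++ s2) = jload p s1 + jload p s2.
Proof. by rewrite /jload big_cat. Qed.

Lemma jload_perm s1 s2 : perm_eq s1 s2 -> jload p s1 = jload p s2.
Proof. by move=> H; rewrite /jload (perm_big _ H). Qed.

Lemma jload_sort s : jload p (sortY p s) = jload p s.
Proof. by apply: jload_perm; rewrite /sortY perm_sort. Qed.

Lemma jload_td k s : jload p (take k s) + jload p (drop k s) = jload p s.
Proof. by rewrite -jload_cat cat_take_drop. Qed.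

Lemma jload_ge0 s : (forall i, i \in s -> 0 <= p i) -> 0 <= jload p s.
Proof.
move=> H; rewrite /jload big_seq; apply: sumr_ge0 => i; exact: H.
Qed.

Lemma sortY_sorted s : sorted (fun a b => p b <= p a) (sortY p s).
Proof.
apply: sort_sorted => a b; exact: le_total.
Qed.

Lemma longest_le_spec b s : 0 <= b ->
  let k := longest_le p b s in
  [/\ (k <= size s)%N, jload p (take k s) <= b &
      forall m, (m <= size s)%N -> jload p (take m s) <= b -> (m <= k)%N].
Proof.
move=> hb k; split.
- rewrite /k /longest_le.
  have := mem_last 0%N [seq k <- iota 0 (size s).+1 | jload p (take k s) <= b].
  rewrite inE => /orP [/eqP ->//|]; rewrite mem_filter mem_iota => /andP [_ /andP [_ H]].
  by rewrite -ltnS.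
- rewrite /k /longest_le.
  apply: (@last_filterP (fun k => jload p (take k s) <= b)).
  by rewrite /= take0 jload_nil.
- move=> m hm hP; rewrite /k /longest_le.
  apply: last_filter_ge; rewrite mem_filter mem_iota hP /=; by rewrite ltnS.
Qed.

Lemma shortest_ge_spec b s :
  let k := shortest_ge p b s in
  [/\ (k <= size s)%N, (b <= jload p (take k s)) \/ (k = size s /\ jload p s < b) &
      forall m, (m < k)%N -> jload p (take m s) < b].
Proof.
move=> k.
have Hmin : forall m, (m <= size s)%N -> b <= jload p (take m s) -> (k <= m)%N.
  move=> m hm hP; rewrite /k /shortest_ge.
  apply: head_filter_le; rewrite mem_filter mem_iota hP /=; by rewrite ltnS.
have Hk : (k <= size s)%N.
  rewrite /k /shortest_ge.
  case E: [seq k <- iota 0 (size s).+1 | b <= jload p (take k s)] => [|x t] //=.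
  have : x \in [seq k <- iota 0 (size s).+1 | b <= jload p (take k s)] by rewrite E inE eqxx.
  by rewrite mem_filter mem_iota /= ltnS => /andP [_ ->].
split => //.
- rewrite /k /shortest_ge.
  case E: [seq k <- iota 0 (size s).+1 | b <= jload p (take k s)] => [|x t] /=.
  + right; split => //.
    rewrite ltNge; apply/negP => H.
    have : size s \in [seq k <- iota 0 (size s).+1 | b <= jload p (take k s)].
      by rewrite mem_filter mem_iota take_size H /=.
    by rewrite E.
  + left.
    have : x \in [seq k <- iota 0 (size s).+1 | b <= jload p (take k s)] by rewrite E inE eqxx.
    by rewrite mem_filter => /andP [].
- move=> m hm; rewrite ltNge; apply/negP => H.
  have := Hmin m (leq_trans (ltnW hm) Hk) H.
  by rewrite leqNgt hm.
Qed.

End Gen.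
Unset Implicit Arguments.
Local Open Scope ring_scope.
Section Step.
Variable R : realFieldType.
Variable M : R.
Variable p : nat -> R.
Variable g : nat -> gos.

Definition rejQ j (Y : seq nat) : Prop :=
  exists k, let Q := take k (sortY p Y) in
    (forall i, i \in Q -> 1 < p i + p j) /\ p j + M - 1 <= jload p Q /\
    1 < jload p Q + (2 - 2 * M).

Lemma step_spec j X Y : 2/3 <= M -> M < 3/4 -> 0 < p j -> p j <= 1 -> (forall i, i \in Y -> 0 < p i) ->
  let y := jload p Y in
  [\/ stepD M p g j (X, Y) = ((j :: X, Y), [::]) /\
        (gos_eqb (g j) G1 \/ M <= y \/ (2 - M < y + p j /\ rejQ j Y)),
      stepD M p g j (X, Y) = ((X, j :: Y), [::]) /\ g j = G2 /\ y < M /\ y + p j <= 2 - M |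
      exists W K, stepD M p g j (X, Y) = ((W ++ X, j :: K), W) /\ perm_eq (W ++ K) Y /\
        g j = G2 /\ y < M /\ jload p (j :: K) <= 2 - M /\ M <= jload p (j :: K) /\
        jload p W <= M * p j].
Proof.
move=> hM1 hM2 hpj hp1 hY y.
have hY0 : forall i, i \in sortY p Y -> 0 <= p i.
  by move=> i; rewrite mem_sort => /hY /ltW.
have hsY : jload p (sortY p Y) = y by rewrite jload_sort.
have trP : transitive (fun a b => p b <= p a).
  move=> a b c /= e1 e2; exact: le_trans e2 e1.
have rfP : reflexive (fun a b => p b <= p a) by move=> a /=; exact: lexx.
rewrite /stepD -/y.
case h2: (gos_eqb (g j) G1 || (M <= y)).
  apply: Or31; split => //; case/orP: h2 => [->|->]; by [left | right; left].
have hG : g j = G2 by move: h2; case: (g j).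
have hyM : y < M by move: h2; rewrite ltNge; case: (M <= y); rewrite ?orbT.
case h3: (y + p j <= 2 - M).
  by apply: Or32.
have h3' : 2 - M < y + p j by rewrite ltNge h3.
case h4: (M <= p j) => /=.
-
  set sY := sortY p Y.
  have hb : 0 <= M * p j by apply: mulr_ge0; lra.
  case: (longest_le_spec p sY hb); set k := longest_le p (M * p j) sY => hk hkP hkmax.
  have htd := jload_td p k sY; rewrite hsY in htd.
  case: ifP => hrej.
  + apply: Or31; split => //; right; right; split => //.
    have hks : (k < size sY)%N.
      rewrite ltn_neqAle hk andbT; apply/negP => /eqP hks.
      move: hrej; rewrite hks take_size hsY. lra.
    exists k.+1.
    set Q := take k.+1 sY.
    have hQ : M * p j < jload p Q.
      rewrite ltNge; apply/negP => H; have := hkmax _ hks H; by rewrite ltnn.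
    have hQe : jload p Q = jload p (take k sY) + p (nth 0%N sY k).
      by rewrite /Q (take_nth 0%N hks) -cats1 jload_cat jload_cons jload_nil addr0.
    have hmin : forall i, i \in Q -> p (nth 0%N sY k) <= p i.
      move=> i hi.
      have hsz : size Q = k.+1 by rewrite /Q size_takel.
      have hidx' : (index i Q < k.+1)%N by rewrite -hsz index_mem.
      have -> : i = nth 0%N sY (index i Q).
        by have := nth_take 0%N hidx' sY; rewrite -/Q (nth_index 0%N hi).
      have hidx : (index i Q <= k)%N by rewrite -ltnS.
      apply: (sorted_leq_nth (leT := fun a b => p b <= p a) trP rfP 0%N (sortY_sorted p Y)).
      * by rewrite inE (leq_ltn_trans hidx hks).
      * by rewrite inE.
      * by [].
    have hpM : M * M <= M * p j by apply: ler_wpM2l; lra.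
    have hpM' : M * p j >= p j + M - 1 by nra.
    split; last split.
    * move=> i hi; have := hmin i hi.
      have : 1 <= M * p j - 2 * M + 2 by nra.
      lra.
    * lra.
    * nra.
  + apply: Or33; exists (take k sY), (drop k sY); split => //.
    split; first by rewrite cat_take_drop /sY /sortY perm_sort.
    have hK : 0 <= jload p (drop k sY).
      by apply: jload_ge0 => i /mem_drop; apply: hY0.
    have hr : y - jload p (take k sY) + p j <= 2 - M by rewrite leNgt hrej.
    rewrite jload_cons; split => //; split => //; split; [lra|split; lra].
-
  have hpM : p j < M by rewrite ltNge h4.
  set sY := sortY p Y.
  case: (shortest_ge_spec p (M / 3) sY); set k := shortest_ge p (M / 3) sY => hk hkP hkmin.
  have htd := jload_td p k sY; rewrite hsY in htd.
  revert hkP.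
  have hp12 : 1/2 < p j by clear h4; lra.
  have hMp : M / 2 <= M * p j.
    have -> : M * p j = M / 2 + M * (p j - 1/2) by ring.
    rewrite lerDl; apply: mulr_ge0; lra.
  case h5: (Num.min (2 * M / 3) (M * p j) < jload p (take k sY)) => /=; case: ifP => hrej.
  +
    move=> _.
    apply: Or31; split => //; right; right; split => //.
    exists k.
    have hw : 2 - 2 * M < jload p (take k sY) by lra.
    have hk0 : k <> 0%N by move=> hk0; move: hw; rewrite hk0 take0 jload_nil; lra.
    have hk1 : k = 1%N.
      case: (ltngtP k 1) => [hlt|hgt|//].
        by exfalso; apply: hk0; move: hlt; case: (k).
      exfalso.
      set m := k.-1.
      have ek : k = m.+1 by rewrite /m prednK // (ltn_trans _ hgt).
      have hm1 : (1 <= m)%N by rewrite -ltnS -ek.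
      have hks : (m < size sY)%N by rewrite -ltnS -ek.
      have h1 : jload p (take m sY) < M / 3 by apply: hkmin; rewrite ek.
      have hsplit : jload p (take k sY) = jload p (take m sY) + p (nth 0%N sY m).
        by rewrite ek (take_nth 0%N hks) -cats1 jload_cat jload_cons jload_nil addr0.
      have hle : p (nth 0%N sY m) <= p (nth 0%N sY 0).
        apply: (sorted_leq_nth (leT := fun a b => p b <= p a) trP rfP 0%N (sortY_sorted p Y)).
        * by rewrite inE (ltn_trans _ hks).
        * by rewrite inE.
        * by [].
      have hfirst : p (nth 0%N sY 0) <= jload p (take m sY).
        have e : take m sY = take 1 sY ++ drop 1 (take m sY).
          by rewrite -{1}(cat_take_drop 1 (take m sY)) (take_takel _ hm1).
        rewrite e jload_cat.
        have -> : take 1 sY = [:: nth 0%N sY 0].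
          by move: hks; case: (sY) => [|a t] //=; rewrite take0.
        rewrite jload_cons jload_nil addr0 lerDl.
        by apply: jload_ge0 => i /mem_drop /mem_take; apply: hY0.
      move: hw; rewrite hsplit; lra.
    rewrite hk1 in hw *.
    have hsz : (0 < size sY)%N.
      by move: hw; case: (sY) => [|a t] //=; rewrite jload_nil; lra.
    have -> : take 1 sY = [:: nth 0%N sY 0].
      by move: hsz; case: (sY) => [|a t] //=; rewrite take0.
    move: hw; have -> : take 1 sY = [:: nth 0%N sY 0].
      by move: hsz; case: (sY) => [|a t] //=; rewrite take0.
    rewrite jload_cons jload_nil addr0 => hw /=.
    rewrite jload_cons jload_nil addr0.
    split; last split.
    * move=> i; rewrite inE => /eqP ->; lra.
    * lra.
    * lra.
  +
    move=> _.
    apply: Or33; exists (drop k sY), (take k sY); split => //.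
    split; first by rewrite perm_catC cat_take_drop /sY /sortY perm_sort.
    have hr : y - jload p (drop k sY) + p j <= 2 - M by rewrite leNgt hrej.
    rewrite jload_cons; split => //; split => //; split; first by lra.
    move: h5; rewrite gt_min => /orP [h5|h5]; split; nra.
  +
    move=> hkP.
    exfalso.
    case: hkP => [hw|[hks hy]].
    * move: hrej; lra.
    * move: hrej; rewrite hks take_size hsY; lra.
  +
    move=> _.
    apply: Or33; exists (take k sY), (drop k sY); split => //.
    split; first by rewrite cat_take_drop /sY /sortY perm_sort.
    move/negbT: h5; rewrite -leNgt => h5.
    have hw : jload p (take k sY) <= 2 * M / 3 /\ jload p (take k sY) <= M * p j.
      split.
      - rewrite le_min in h5; case/andP: h5 => //.
      - rewrite le_min in h5; case/andP: h5 => //.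
    have hr : y - jload p (take k sY) + p j <= 2 - M by rewrite leNgt hrej.
    case: hw => hw1 hw2.
    rewrite jload_cons; split => //; split => //; split; first by lra.
    split; lra.
Qed.
End Step.
Set Implicit Arguments. Unset Strict Implicit.
Local Open Scope ring_scope.

Lemma perm_iotaS (s : seq nat) j : perm_eq s (iota 0 j) -> perm_eq (j :: s) (iota 0 j.+1).
Proof.
move=> H; rewrite -addn1 iotaD add0n perm_sym (perm_catC (iota 0 j)) /= perm_cons perm_sym //.
Qed.

Section Run.
Variable R : realFieldType.
Variable M : R.
Variable p : nat -> R.
Variable g : nat -> gos.
Variable n : nat.

Definition Xs j := (runD M p g j).1.
Definition Ys j := (runD M p g j).2.
Definition yv j := jload p (Ys j).

Lemma inv_run (hM1 : 2/3 <= M) (hM2 : M < 3/4)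
  (hp : forall i, (i < n)%N -> 0 < p i) (hp1 : forall i, (i < n)%N -> p i <= 1) :
  forall j, (j <= n)%N ->
  perm_eq (Xs j ++ Ys j) (iota 0 j) /\ (forall i, i \in Ys j -> g i = G2) /\ yv j <= 2 - M.
Proof.
elim=> [|j IH] hj.
  rewrite /Xs /Ys /yv /= jload_nil; split => //; split => //; lra.
have hjn : (j < n)%N by [].
case: (IH (ltnW hj)); rewrite /yv /Xs /Ys.
case E: (runD M p g j) => [X Y] [hperm [hG hy]].
simpl in hperm, hG, hy.
have Hrun : runD M p g j.+1 = (stepD M p g j (X, Y)).1.
  by change (runD M p g j.+1) with (stepD M p g j (runD M p g j)).1; rewrite E.
rewrite Hrun.
have hYp : forall i, i \in Y -> 0 < p i.
  move=> i hi; apply: hp; apply: (ltn_trans _ hjn).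
  have : i \in iota 0 j by rewrite -(perm_mem hperm) mem_cat hi orbT.
  by rewrite mem_iota.
case: (@step_spec R M p g j X Y hM1 hM2 (hp j hjn) (hp1 j hjn) hYp).
- move=> [Hs _]; rewrite Hs /=; split; first exact: perm_iotaS.
  by split.
- move=> [Hs [hgj [_ hy']]]; rewrite Hs /=; split.
    rewrite (perm_catCA X [:: j] Y) /=; exact: perm_iotaS.
  split; last by rewrite jload_cons addrC.
  by move=> i; rewrite inE => /orP [/eqP ->|/hG].
- move=> [W [K [Hs [hWK [hgj [_ [hy' _]]]]]]]; rewrite Hs /=; split.
    apply: (@perm_trans _ (j :: (X ++ Y))); last exact: perm_iotaS.
    rewrite -[j :: K]cat1s (perm_catCA (W ++ X) [:: j] K) /= perm_cons.
    by rewrite -catA (perm_catCA W X K) perm_cat2l.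
  split => //.
  move=> i; rewrite inE => /orP [/eqP ->//|hi]; apply: hG.
  by rewrite -(perm_mem hWK) mem_cat hi orbT.
Qed.

Section Hyps.
Variables (hM1 : 2/3 <= M) (hM2 : M < 3/4)
  (hp : forall i, (i < n)%N -> 0 < p i) (hp1 : forall i, (i < n)%N -> p i <= 1).

Lemma step_at j : (j < n)%N ->
  let r := stepD M p g j (runD M p g j) in
  runD M p g j.+1 = r.1 /\
  [\/ r = ((j :: Xs j, Ys j), [::]) /\
        (gos_eqb (g j) G1 \/ M <= yv j \/ (2 - M < yv j + p j /\ rejQ R M p j (Ys j))),
      r = ((Xs j, j :: Ys j), [::]) /\ g j = G2 /\ yv j < M /\ yv j + p j <= 2 - M |
      exists W K, r = ((W ++ Xs j, j :: K), W) /\ yv j < M /\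
        M <= jload p (j :: K) /\ jload p W <= M * p j].
Proof.
move=> hjn r; split => //.
have [hperm _] := inv_run hM1 hM2 hp hp1 (ltnW hjn).
rewrite /r /yv /Xs /Ys in hperm *.
case E: (runD M p g j) => [X Y] /=.
rewrite E /= in hperm.
have hYp : forall i, i \in Y -> 0 < p i.
  move=> i hi; apply: hp; apply: (ltn_trans _ hjn).
  have : i \in iota 0 j by rewrite -(perm_mem hperm) mem_cat hi orbT.
  by rewrite mem_iota.
case: (@step_spec R M p g j X Y hM1 hM2 (hp hjn) (hp1 hjn) hYp).
- by move=> H; apply: Or31.
- by move=> [H1 [H2 [H3 H4]]]; apply: Or32.
- move=> [W [K [H1 [_ [_ [H3 [_ [H5 H6]]]]]]]]; apply: Or33; exists W, K; by [].
Qed.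

Lemma mig_bound j : (j < n)%N -> jload p (migratedD M p g j) <= M * p j.
Proof.
move=> hjn; rewrite /migratedD.
have hpj := hp hjn.
have hA := hM1; have hM : 0 <= M * p j by apply: mulr_ge0; lra.
case: (step_at hjn) => _ [[-> _]|[-> _]|[W [K [-> [_ [_ H]]]]]] //=; by rewrite jload_nil.
Qed.

Lemma stay j : (j < n)%N -> M <= yv j -> yv j.+1 = yv j.
Proof.
move=> hjn hy.
case: (step_at hjn) => Hr [[Hs _]|[Hs [_ [H _]]]|[W [K [Hs [H _]]]]].
- by rewrite /yv /Ys Hr Hs.
- exfalso; move: hy H; lra.
- exfalso; move: hy H; lra.
Qed.

Lemma stayD j d : (j + d <= n)%N -> M <= yv j -> yv (j + d) = yv j.
Proof.
move=> hjd hy; elim: d hjd => [|d IH] hjd; first by rewrite addn0.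
rewrite addnS in hjd *; have IH' := IH (ltnW hjd).
by rewrite stay // IH'.
Qed.

End Hyps.
End Run.
Set Implicit Arguments. Unset Strict Implicit.
Local Open Scope ring_scope.

Section Sums.
Variable R : realFieldType.
Variable p : nat -> R.
Variable n : nat.

Lemma sum_list s : uniq s -> (forall i, i \in s -> (i < n)%N) ->
  jload p s = \sum_(i < n) (if (i : nat) \in s then p i else 0).
Proof.
move=> hu hs.
rewrite -big_mkcond /= -(big_mkord (fun i => i \in s) p) /index_iota subn0 -big_filter.
apply: jload_perm; apply: uniq_perm => //.
  by rewrite filter_uniq // iota_uniq.
move=> i; rewrite mem_filter mem_iota /=.
by case hi: (i \in s) => //=; rewrite add0n hs.
Qed.

Lemma side (a : nat -> bool) b s : (forall i, (i < n)%N -> 0 <= p i) -> uniq s ->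
  (forall i, i \in s -> (i < n)%N /\ a i = b) ->
  jload p s <= \sum_(i < n | a i == b) p i.
Proof.
move=> hp hu hs.
rewrite (sum_list hu); last by move=> i /hs [].
rewrite [X in _ <= X]big_mkcond /=; apply: ler_sum => i _.
case hi: ((i : nat) \in s).
  by have [_ ->] := hs _ hi; rewrite eqxx.
by case: (a i == b) => //; apply: hp.
Qed.

End Sums.

Section Regime.
Variable R : realFieldType.
Variables (M : R) (p : nat -> R) (g : nat -> gos) (n : nat).
Variables (hM1 : 2/3 <= M) (hM2 : M < 3/4)
  (hp : forall i, (i < n)%N -> 0 < p i) (hp1 : forall i, (i < n)%N -> p i <= 1).
Variable (hyn : yv M p g n < M).

Definition isG1 j := gos_eqb (g j) G1.
Definition rejb j := gos_eqb (g j) G2 && (2 - M < yv M p g j + p j).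

Lemma reg_y j : (j <= n)%N -> yv M p g j < M.
Proof.
move=> hj; rewrite ltNge; apply/negP => H.
have := @stayD R M p g n hM1 hM2 hp hp1 j (n - j)%N.
rewrite subnKC // => /(_ (leqnn n) H) E.
by move: hyn; rewrite E ltNge H.
Qed.

Lemma reg_step j : (j < n)%N ->
  (Xs M p g j.+1 = j :: Xs M p g j /\ Ys M p g j.+1 = Ys M p g j /\ (isG1 j || rejb j) /\
     (rejb j -> rejQ R M p j (Ys M p g j)))
  \/ (Xs M p g j.+1 = Xs M p g j /\ Ys M p g j.+1 = j :: Ys M p g j /\ ~~ isG1 j /\ ~~ rejb j).
Proof.
move=> hjn.
have hyj := reg_y (ltnW hjn).
have hyj1 := reg_y hjn.
case: (@step_at R M p g n hM1 hM2 hp hp1 j hjn) => Hrun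
  [[Hs H]|[Hs [hg [_ H]]]|[W [K [Hs [_ [H _]]]]]]; rewrite /Xs /Ys Hrun Hs /=.
- left; do 2 split => //.
  rewrite /isG1 /rejb.
  case: H => [H|[H|[H1 H2]]].
  + by move: H; case: (g j).
  + by exfalso; move: H hyj; lra.
  + rewrite H1 andbT; split; first by case: (g j).
    by move=> _.
- right; do 2 split => //; rewrite /isG1 /rejb hg /= -leNgt; split => //.
- exfalso; move: hyj1; rewrite /yv /Ys Hrun Hs /=; lra.
Qed.

Lemma XL j : (j <= n)%N ->
  jload p (Xs M p g j) = \sum_(0 <= i < j) (if isG1 i || rejb i then p i else 0).
Proof.
elim: j => [|j IH] hj; first by rewrite big_geq // /Xs /= jload_nil.
rewrite big_nat_recr //= -IH; last exact: ltnW.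
case: (reg_step hj) => [[-> [_ [-> _]]]|[-> [_ [h1 h2]]]].
- by rewrite jload_cons addrC.
- by rewrite (negbTE h1) (negbTE h2) addr0.
Qed.

Lemma YR j : (j <= n)%N -> forall i, i \in Ys M p g j -> ~~ rejb i.
Proof.
elim: j => [|j IH] hj i //.
case: (reg_step hj) => [[_ [-> _]]|[_ [-> [_ h2]]]].
- exact: IH (ltnW hj) i.
- rewrite inE => /orP [/eqP ->//|]; exact: IH (ltnW hj) i.
Qed.

Lemma Ys_lt j : (j <= n)%N -> forall i, i \in Ys M p g j -> (i < j)%N.
Proof.
move=> hj i hi.
have [hperm _] := @inv_run R M p g n hM1 hM2 hp hp1 j hj.
have : i \in iota 0 j by rewrite -(perm_mem hperm) mem_cat hi orbT.
by rewrite mem_iota.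
Qed.

Lemma Ys_uniq j : (j <= n)%N -> uniq (Ys M p g j).
Proof.
move=> hj.
have [hperm _] := @inv_run R M p g n hM1 hM2 hp hp1 j hj.
have := perm_uniq hperm; rewrite iota_uniq cat_uniq => /and3P [_ _ //].
Qed.

Lemma Ys_G2 j : (j <= n)%N -> forall i, i \in Ys M p g j -> g i = G2.
Proof.
move=> hj.
by have [_ [H _]] := @inv_run R M p g n hM1 hM2 hp hp1 j hj.
Qed.

Lemma rej_big r : (r < n)%N -> rejb r -> 2 - 2 * M < p r.
Proof.
move=> hr; rewrite /rejb => /andP [_ H].
have := reg_y (ltnW hr); have h := hM2; lra.
Qed.

Lemma rej_Q r : (r < n)%N -> rejb r -> rejQ R M p r (Ys M p g r).
Proof.
move=> hr hrej.
case: (reg_step hr) => [[_ [_ [_ H]]]|[_ [_ [_ H]]]]; first exact: H.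
by rewrite hrej in H.
Qed.

End Regime.
Local Open Scope ring_scope.

Theorem mainTheorem13 (R : realFieldType) (M : R) :
  2 / 3 <= M -> M < 3 / 4 ->
  forall (n : nat) (p : nat -> R) (g : nat -> gos),
    (forall j, (j < n)%N -> 0 < p j) ->
    opt_is_one n p g ->
    (forall j, (j < n)%N -> jload p (migratedD M p g j) <= M * p j) /\
    makespanD M p g n <= 2 - M.
Proof.
move=> hM1 hM2 n p g hp [[a [hfeas hms]] _].
have hp0 : forall i, (i < n)%N -> 0 <= p i by move=> i /hp /ltW.
pose T b := \sum_(i < n | a i == b) p i.
have hT : forall b, T b <= 1.
  move: hms; rewrite /makespan ge_max => /andP [h0 h1] [|].
  - by rewrite /T (eq_bigl (fun i : 'I_n => a i)) // => i; case: (a i).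
  - by rewrite /T (eq_bigl (fun i : 'I_n => ~~ a i)) // => i; case: (a i).
have hp1 : forall i, (i < n)%N -> p i <= 1.
  move=> i hi; apply: le_trans (hT (a i)).
  have := @side R p n a (a i) [:: i] hp0 erefl.
  rewrite jload_cons jload_nil addr0; apply => j; rewrite inE => /eqP ->; by split.
split.
  move=> j hj; exact: (@mig_bound R M p g n hM1 hM2 hp hp1 j hj).
have [hperm [_ hyle]] := @inv_run R M p g n hM1 hM2 hp hp1 n (leqnn n).
have -> : makespanD M p g n = Num.max (jload p (Xs M p g n)) (yv M p g n).
  by rewrite /makespanD /yv /Xs /Ys; case: (runD M p g n).
rewrite ge_max hyle andbT.
have htot : jload p (Xs M p g n) + yv M p g n = T false + T true.
  rewrite /yv -jload_cat (jload_perm _ hperm) /jload.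
  have -> : iota 0 n = index_iota 0 n by rewrite /index_iota subn0.
  rewrite big_mkord (bigID (fun i : 'I_n => a i)) /= addrC /T.
  congr (_ + _); apply: eq_bigl => i; by case: (a i).
have hA := hM1; have hB := hM2.
case: (leP M (yv M p g n)) => hy.
  have := hT false; have := hT true; lra.
have hG1a : forall i, (i < n)%N -> isG1 g i -> a i = false.
  move=> i hi; rewrite /isG1; case ha: (a i) => //.
  by rewrite (hfeas i hi ha).
have hQ : forall r, (r < n)%N -> rejb M p g r ->
   exists Q, [/\ uniq Q, (forall i, i \in Q -> [/\ (i < r)%N, ~~ rejb M p g i & g i = G2]),
     (forall i, i \in Q -> 1 < p i + p r), p r + M - 1 <= jload p Q &
     1 < jload p Q + (2 - 2 * M)].
  move=> r hr hrej.
  have [k [H1 [H2 H3]]] := @rej_Q R M p g n hM1 hM2 hp hp1 hy r hr hrej.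
  exists (take k (sortY p (Ys M p g r))); split => //.
  - by apply: take_uniq; rewrite sort_uniq (@Ys_uniq R M p g n hM1 hM2 hp hp1 r (ltnW hr)).
  - move=> i /mem_take; rewrite mem_sort => hi; split.
    + exact: (@Ys_lt R M p g n hM1 hM2 hp hp1 r (ltnW hr)).
    + exact: (@YR R M p g n hM1 hM2 hp hp1 hy r (ltnW hr)).
    + exact: (@Ys_G2 R M p g n hM1 hM2 hp hp1 r (ltnW hr)).
have two : forall r1 r2, (r1 < r2)%N -> (r2 < n)%N -> rejb M p g r1 -> rejb M p g r2 -> False.
  move=> r1 r2 h12 h2n hr1 hr2.
  have h1n : (r1 < n)%N := ltn_trans h12 h2n.
  have b1 := @rej_big R M p g n hM1 hM2 hp hp1 hy r1 h1n hr1.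
  have b2 := @rej_big R M p g n hM1 hM2 hp hp1 hy r2 h2n hr2.
  have [Q [hu hQi hQ1 hQ2 hQ3]] := hQ r2 h2n hr2.
  have hne : a r1 != a r2.
    apply/negP => /eqP e.
    have := @side R p n a (a r1) [:: r1; r2] hp0.
    rewrite /= !inE andbT (ltn_eqF h12) => /(_ erefl).
    rewrite !jload_cons jload_nil addr0.
    have H : forall i, i \in [:: r1; r2] -> (i < n)%N /\ a i = a r1.
      by move=> i; rewrite !inE => /orP [/eqP ->|/eqP ->].
    move=> /(_ H) H'; have := hT (a r1); rewrite /T in H' *; lra.
  have aQ : forall i, i \in Q -> a i = a r1.
    move=> i hi.
    have [hir _ _] := hQi i hi.
    case e: (a i == a r2).
      exfalso.
      have := @side R p n a (a r2) [:: r2; i] hp0.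
      rewrite /= !inE andbT (gtn_eqF hir) => /(_ erefl).
      have H : forall k, k \in [:: r2; i] -> (k < n)%N /\ a k = a r2.
        move=> k; rewrite !inE => /orP [/eqP ->|/eqP ->]; split => //.
        + exact: ltn_trans hir h2n.
        + exact/eqP.
      move=> /(_ H); rewrite !jload_cons jload_nil addr0 => H'.
      have := hT (a r2); have := hQ1 i hi; rewrite /T in H' *; lra.
    by move: e hne; case: (a i); case: (a r1); case: (a r2).
  have hr1Q : r1 \notin Q.
    apply/negP => /hQi [_ hnr _]; by rewrite hr1 in hnr.
  have := @side R p n a (a r1) (r1 :: Q) hp0.
  rewrite /= hr1Q hu => /(_ erefl).
  have H : forall k, k \in r1 :: Q -> (k < n)%N /\ a k = a r1.
    move=> k; rewrite inE => /orP [/eqP ->|hk]; first by split.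
    split; last exact: aQ.
    have [hk2 _ _] := hQi k hk; exact: ltn_trans hk2 h2n.
  move=> /(_ H); rewrite jload_cons => H'.
  have := hT (a r1); rewrite /T in H' *; lra.
rewrite (@XL R M p g n hM1 hM2 hp hp1 hy n (leqnn n)) big_mkord.
case: (boolP (has (rejb M p g) (iota 0 n))) => hhas.
- case/hasP: hhas => r; rewrite mem_iota add0n /= => hr hrej.
  have uniqr : forall i, (i < n)%N -> rejb M p g i -> i = r.
    move=> i hi hri; case: (ltngtP i r) => // h.
    + by exfalso; apply: (two i r).
    + by exfalso; apply: (two r i).
  case ar: (a r).
  + have [Q [hu hQi hQ1 hQ2 hQ3]] := hQ r hr hrej.
    have aQ : forall i, i \in Q -> a i = false.
      move=> i hi.
      have [hir _ _] := hQi i hi.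
      case e: (a i) => //; exfalso.
      have := @side R p n a true [:: r; i] hp0.
      rewrite /= !inE andbT (gtn_eqF hir) => /(_ erefl).
      have H : forall k, k \in [:: r; i] -> (k < n)%N /\ a k = true.
        move=> k; rewrite !inE => /orP [/eqP ->|/eqP ->]; split => //.
        exact: ltn_trans hir hr.
      move=> /(_ H); rewrite !jload_cons jload_nil addr0 => H'.
      have := hT true; have := hQ1 i hi; rewrite /T in H' *; lra.
    have hQn : forall i, i \in Q -> (i < n)%N.
      by move=> i /hQi [hi _ _]; apply: ltn_trans hi hr.
    have e1 := @sum_list R p n Q hu hQn.
    have e2 := @sum_list R p n [:: r] erefl.
    rewrite jload_cons jload_nil addr0 in e2.
    have e2' : p r = \sum_(i < n) (if (i : nat) \in [:: r] then p i else 0).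
      by apply: e2 => i; rewrite inE => /eqP ->.
    have key : \sum_(i < n) (if isG1 g i || rejb M p g i then p i else 0) + jload p Q
               <= T false + p r.
      rewrite e1 e2' /T (big_mkcond (fun i : 'I_n => a i == false)) -!big_split /=; apply: ler_sum => i _.
      have hi := ltn_ord i.
      case hg1: (isG1 g i) => /=.
        have hai := hG1a i hi hg1; rewrite hai eqxx.
        have -> : ((i : nat) \in Q) = false.
          apply/negP => /hQi [_ _ hg2]; by move: hg1; rewrite /isG1 hg2.
        have -> : ((i : nat) \in [:: r]) = false.
          rewrite inE; apply/negP => /eqP e; by move: hai; rewrite e ar.
        lra.
      case hri: (rejb M p g i).
        have ei := uniqr i hi hri.
        have -> : ((i : nat) \in Q) = false.
          apply/negP => /hQi [hlt _ _]; by move: hlt; rewrite ei ltnn.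
        by rewrite ei ar inE eqxx /=; lra.
      case hiQ: ((i : nat) \in Q).
        by rewrite (aQ _ hiQ) eqxx; have := hp0 _ hi; case: (_ \in _); lra.
      have := hp0 _ hi; case: (a i == false); case: (_ \in _); lra.
    have := hT false; lra.
  + suff hs : \sum_(i < n) (if isG1 g i || rejb M p g i then p i else 0) <= T false.
    by have := hT false; lra.
    rewrite /T [X in _ <= X]big_mkcond /=; apply: ler_sum => i _.
    have hi := ltn_ord i.
    case hg1: (isG1 g i) => /=; first by rewrite (hG1a i hi hg1) eqxx.
    case hri: (rejb M p g i) => /=.
      by rewrite (uniqr i hi hri) ar eqxx.
    by case: (a i == false) => //; apply: hp0.
- suff hs : \sum_(i < n) (if isG1 g i || rejb M p g i then p i else 0) <= T false.
    by have := hT false; lra.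
  rewrite /T [X in _ <= X]big_mkcond /=; apply: ler_sum => i _.
  have hi := ltn_ord i.
  case hg1: (isG1 g i) => /=; first by rewrite (hG1a i hi hg1) eqxx.
  have -> : rejb M p g i = false.
    apply/negP => hri; move/hasPn: hhas => /(_ i); rewrite mem_iota add0n hi hri.
    by move=> /(_ erefl).
  by case: (a i == false) => //; apply: hp0.
Qed.
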